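(* Let $G=(V,E)$ be a finite graph and let $\underline{r}^G=(r_v)_{v\in V}\in\mathbb{Z}^{V}$. Let $H$ be an arbitrary $2$-cover of $G$, and let $G\times K_2$ be the bipartite double cover of $G$. Let $\underline{r}$ denote the vector induced by $\underline{r}^G$ on $H$ and on $G\times K_2$, i.e. each lift $u'$ of a vertex $u\in V$ gets value $r_{u'}=r_u$. Then $$h_{\underline{r}}(G\times K_2)\geq h_{\underline{r}}(H).$$ In other words, for any $\underline{r}\in\mathbb{Z}^{V}$, among all $2$-covers $H$ of $G$ the quantity $h_{\underline{r}}(H)$ is maximized by $G\times K_2$.
   Context: A $2$-cover of $G$ is a graph with vertex set $V\times\{0,1\}$ obtained by choosing, for every edge $uv\in E$, either the pair of edges $(u,0)(v,0),(u,1)(v,1)$ or the pair $(u,0)(v,1),(u,1)(v,0)$, and having no other edges. The bipartite double cover $G\times K_2$ is the $2$-cover in which the second choice is made for every edge. For a graph $F$ and $\underline{r}=(r_v)\in\mathbb{Z}^{V(F)}$, $h_{\underline{r}}(F)$ denotes the number of subgraphs (edge subsets) $S$ of $F$ such that every vertex $v$ is incident to exactly $r_v$ edges of $S$. *)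

(* Defs.v *)
From HB Require Import structures.
From mathcomp Require Import all_boot all_order all_algebra.
Set Implicit Arguments. Unset Strict Implicit. Unset Printing Implicit Defensive.

(* A finite simple graph is a symmetric irreflexive relation e on a finType. *)

Definition edges (V : finType) (f : rel V) : {set {set V}} :=
  [set [set p.1; p.2] | p in [set p : V * V | f p.1 p.2]].

Definition h_r (V : finType) (f : rel V) (r : V -> int) : nat :=
  #|[set S : {set {set V}} | (S \subset edges f) &&
       [forall v : V, (#|[set g in S | v \in g]| : int) == r v]]|.

(* The 2-cover of (T, e) determined by a choice s of "crossing" (true) or
   "parallel" (false) for every edge {u,v} (s is read on the edge as the set
   [set u; v]).  For a parallel edge uv we have the edges
   (u,0)(v,0),(u,1)(v,1); for a crossing one (u,0)(v,1),(u,1)(v,0). *)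
Definition two_cover (T : finType) (e : rel T) (s : {set T} -> bool)
  : rel (T * bool) :=
  fun x y => e x.1 y.1 && ((x.2 (+) y.2) == s [set x.1; y.1]).

Definition bip_double_cover (T : finType) (e : rel T) : rel (T * bool) :=
  two_cover e (fun _ => true).

Definition lift_r (T : finType) (r : T -> int) : T * bool -> int :=
  fun x => r x.1.

(* Main.v *)
Require Import Defs.
From HB Require Import structures.
From mathcomp Require Import all_boot all_order all_algebra.
From mathcomp Require Import zify.
Set Implicit Arguments. Unset Strict Implicit. Unset Printing Implicit Defensive.

Lemma fiber_bij (E : finType) (I : eqType) (k1 k2 : E -> I) :
  (forall i, #|[pred x | k1 x == i]| = #|[pred x | k2 x == i]|) ->
  exists2 phi : E -> E, injective phi & forall x, k1 (phi x) = k2 x.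
Proof.
move=> Hc.
pose L1 i := enum [pred y | k1 y == i].
pose L2 i := enum [pred y | k2 y == i].
have HL x : index x (L2 (k2 x)) < size (L1 (k2 x)).
  by rewrite /L1 /L2 -cardE Hc cardE index_mem mem_enum inE.
have HL2 x : index x (L2 (k2 x)) < size (L2 (k2 x)).
  by rewrite /L2 index_mem mem_enum inE.
have Hm x : k1 (nth x (L1 (k2 x)) (index x (L2 (k2 x)))) = k2 x.
  by have := mem_nth x (HL x); rewrite /L1 mem_enum inE => /eqP.
exists (fun x => nth x (L1 (k2 x)) (index x (L2 (k2 x)))); last exact: Hm.
move=> x y /= Exy.
have Hk : k2 x = k2 y by rewrite -Hm Exy Hm.
move: Exy; rewrite Hk [RHS](set_nth_default x) ?HL //.
move/eqP; rewrite nth_uniq ?HL ?enum_uniq //; last by rewrite -Hk HL.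
move=> /eqP Hi.
have Hx : x \in L2 (k2 y) by rewrite /L2 mem_enum inE Hk.
by rewrite -(nth_index x Hx) Hi nth_index // /L2 mem_enum inE.
Qed.

Definition invol_on (E : finType) (X : {set E}) (f : E -> E) :=
  forall x, x \in X -> [&& f x \in X, f x != x & f (f x) == x].

Lemma bip_col (E : finType) (R : E -> E) n : forall (X : {set E}) (rho : E -> E),
  #|X| = n -> invol_on X R -> invol_on X rho ->
  exists c : E -> bool, forall x, x \in X -> (c (R x) != c x) && (c (rho x) != c x).
Proof.
elim/ltn_ind: n => n IH X rho HX HR Hr.
case: (set_0Vmem X) => [->|[a Ha]]; first by exists (fun _ => true) => x; rewrite inE.
have /and3P [Hb Hba /eqP HRb] := HR a Ha.
set b := R a in Hb Hba HRb *.
have Hab : a != b by rewrite eq_sym.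
set X' := X :\ a :\ b.
have HX' : #|X'| < n.
  rewrite -HX /X' (cardsD1 a X) Ha (cardsD1 b (X :\ a)) !inE Hb Hba /=.
  by rewrite !add1n ltnS leqnSn.
have inX' x : (x \in X') = [&& x != b, x != a & x \in X] by rewrite !inE.
have HR' : invol_on X' R.
  move=> x; rewrite inX' => /and3P [xb xa xX].
  have /and3P [RX Rx /eqP RRx] := HR x xX.
  rewrite inX' RX Rx RRx eqxx !andbT /=.
  apply/andP; split.
  - by apply: contra xa => /eqP E1; rewrite -RRx E1 HRb.
  - by apply: contra xb => /eqP E1; rewrite -RRx E1.
case: (eqVneq (rho a) b) => [Hra|Hra].
-
  have Hr' : invol_on X' rho.
    move=> x; rewrite inX' => /and3P [xb xa xX].
    have /and3P [rX rx /eqP rrx] := Hr x xX.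
    have /and3P [_ _ /eqP rra] := Hr a Ha.
    rewrite inX' rX rx rrx eqxx !andbT /=.
    apply/andP; split.
    + by apply: contra xa => /eqP E1; rewrite -rrx E1 -Hra rra.
    + by apply: contra xb => /eqP E1; rewrite -rrx E1 Hra.
  have [c Hc] := IH _ HX' X' rho erefl HR' Hr'.
  exists (fun x => if x == a then true else if x == b then false else c x).
  move=> x xX.
  have /and3P [_ _ /eqP rra] := Hr a Ha.
  case: (eqVneq x a) => [->|xa].
    by rewrite Hra eqxx (negbTE Hba).
  case: (eqVneq x b) => [->|xb].
    by rewrite HRb eqxx -{1}Hra rra eqxx.
  have x' : x \in X' by rewrite inX' xa xb xX.
  have /and3P [RX' _ _] := HR' x x'.
  have /and3P [rX' _ _] := Hr' x x'.
  move: RX' rX'; rewrite !inX' => /and3P [/negbTE -> /negbTE -> _] /and3P [/negbTE -> /negbTE -> _].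
  exact: Hc.
- set a' := rho a; set b' := rho b.
  have /and3P [a'X a'a /eqP rra] := Hr a Ha.
  have /and3P [b'X b'b /eqP rrb] := Hr b Hb.
  have a'b : a' != b by [].
  have b'a : b' != a by apply: contra Hra => /eqP <-; rewrite /b' rrb.
  have a'b' : a' != b' by apply: contra Hab => /eqP E1; rewrite -rra -rrb; apply/eqP; congr rho; exact: E1.
  pose rho' x := if x == a' then b' else if x == b' then a' else rho x.
  have a'X' : a' \in X' by rewrite inX' a'b a'a a'X.
  have b'X' : b' \in X' by rewrite inX' b'b b'a b'X.
  have Hr' : invol_on X' rho'.
    move=> x; rewrite /rho'.
    case: (eqVneq x a') => [->|xa']; first by move=> _; rewrite b'X' eq_sym a'b' eq_sym (negbTE a'b') !eqxx.
    case: (eqVneq x b') => [->|xb']; first by move=> _; rewrite a'X' a'b' !eqxx.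
    rewrite inX' => /and3P [xb xa xX].
    have /and3P [rX rx /eqP rrx] := Hr x xX.
    have rxa' : rho x != a' by apply: contra xa => /eqP E1; rewrite -rrx E1 rra.
    have rxb' : rho x != b' by apply: contra xb => /eqP E1; rewrite -rrx E1 rrb.
    rewrite (negbTE rxa') (negbTE rxb') rrx eqxx rx andbT inX' rX andbT.
    apply/andP; split.
    + by apply: contra xb' => /eqP E1; rewrite -rrx E1.
    + by rewrite andbT; apply: contra xa' => /eqP E1; rewrite -rrx E1.
  have [c Hc] := IH _ HX' X' rho' erefl HR' Hr'.
  have ca'b' : c b' != c a'.
    by have /andP [_] := Hc a' a'X'; rewrite /rho' eqxx.
  exists (fun x => if x == a then ~~ c a' else if x == b then ~~ c b' else c x).
  move=> x xX.
  case: (eqVneq x a) => [->|xa].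
    rewrite (negbTE Hba) eqxx (negbTE a'a) (negbTE a'b) /=.
    by move: ca'b'; case: (c a'); case: (c b').
  case: (eqVneq x b) => [->|xb].
    rewrite HRb eqxx -/b' (negbTE b'a) (negbTE b'b) /=.
    by move: ca'b'; case: (c a'); case: (c b').
  have x' : x \in X' by rewrite inX' xa xb xX.
  have /and3P [RX' _ _] := HR' x x'.
  move: RX'; rewrite inX' => /and3P [/negbTE -> /negbTE -> _].
  have /andP [HcR Hcr] := Hc x x'.
  rewrite HcR /=.
  case: (eqVneq x a') => [Exa|xa'].
    by rewrite Exa rra eqxx; case: (c a').
  case: (eqVneq x b') => [Exb|xb'].
    by rewrite Exb rrb (negbTE Hba) eqxx; case: (c b').
  have /and3P [rX' _ _] := Hr' x x'.
  move: rX' Hcr; rewrite /rho' (negbTE xa') (negbTE xb') inX' => /and3P [/negbTE -> /negbTE -> _].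
  done.
Qed.

Section Core.
Variables (T : finType) (O : {set T * T}) (r : T -> int).
Local Notation E := ((T * T) * bool)%type.

Definition vx (x : E) : T := if x.2 then x.1.2 else x.1.1.
Definition delta (sg : T * T -> bool) (Z : {set E}) (x : E) (b : bool) : nat :=
  \sum_(a : bool) (((x.1, a) \in Z) && ((a (+) (x.2 && sg x.1)) == b)).
Definition deg sg (Z : {set E}) w b := \sum_(x : E | (x.1 \in O) && (vx x == w)) delta sg Z x b.
Definition valid sg (Z : {set E}) :=
  [forall z in Z, z.1 \in O] && [forall w, forall b, Posz (deg sg Z w b) == r w].
Definition Mset (Z : {set E}) := [set g : T * T | ((g, false) \in Z) != ((g, true) \in Z)].
Definition kZ (Z : {set E}) g := (g, true) \in Z.
Definition lvl sg (Z : {set E}) (x : E) := kZ Z x.1 (+) (x.2 && sg x.1).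
Definition compat sg (Z : {set E}) (rho : {ffun E -> E}) :=
  [forall x, if x.1 \in Mset Z then
     [&& (rho x).1 \in Mset Z, vx (rho x) == vx x, rho (rho x) == x &
         lvl sg Z (rho x) != lvl sg Z x]
   else rho x == x].
Definition Cset sg (Z : {set E}) w b := [set x : E | [&& x.1 \in Mset Z, vx x == w & lvl sg Z x == b]].
Definition Aw (Z : {set E}) w := \sum_(x : E | [&& x.1 \in O, vx x == w & x.1 \notin Mset Z]) kZ Z x.1.

Lemma deg_split sg (Z : {set E}) w b : (forall z, z \in Z -> z.1 \in O) ->
  deg sg Z w b = Aw Z w + #|Cset sg Z w b|.
Proof.
move=> HZ.
rewrite /deg (bigID (fun x : E => x.1 \in Mset Z)) /= addnC.
congr (_ + _).
  rewrite /Aw; apply: eq_big => x; first by rewrite andbA.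
  move=> /andP [_ xM]; rewrite /delta big_bool /= /kZ.
  move: xM; rewrite inE negbK => /eqP ->.
  by case: ((x.1, true) \in Z); case: (x.2 && sg x.1); case: b.
rewrite -sum1_card big_mkcond [RHS]big_mkcond /=.
apply: eq_bigr => x _.
rewrite [x \in Cset _ _ _ _]inE.
case xM: (x.1 \in Mset Z); last by rewrite !andbF.
have xO : x.1 \in O.
  case H1: ((x.1, false) \in Z); first exact: HZ _ H1.
  case H2: ((x.1, true) \in Z); first exact: HZ _ H2.
  by rewrite inE H1 H2 in xM.
rewrite xO /=.
case: (vx x == w) => //=.
rewrite /delta big_bool /= /lvl /kZ.
move: xM; rewrite inE.
by case: ((x.1, true) \in Z); case: ((x.1, false) \in Z); case: (x.2 && sg x.1); case: b.
Qed.


Lemma valid_sub sg (Z : {set E}) : valid sg Z -> forall z, z \in Z -> z.1 \in O.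
Proof. by case/andP => /forall_inP H _. Qed.

Lemma valid_deg sg (Z : {set E}) w b : valid sg Z -> Posz (deg sg Z w b) = r w.
Proof. by case/andP => _ /forallP /(_ w) /forallP /(_ b) /eqP. Qed.

Lemma valid_bal sg (Z : {set E}) w b : valid sg Z ->
  #|Cset sg Z w b| = #|Cset sg Z w (~~ b)|.
Proof.
move=> HV; have HZ := valid_sub HV.
have := valid_deg w b HV; have := valid_deg w (~~ b) HV.
rewrite !deg_split // => <- /eqP; rewrite eqz_nat eqn_add2l => /eqP.
by [].
Qed.

Lemma compatE sg (Z : {set E}) rho x : compat sg Z rho -> x.1 \in Mset Z ->
  [/\ (rho x).1 \in Mset Z, vx (rho x) = vx x, rho (rho x) = x &
      lvl sg Z (rho x) = ~~ lvl sg Z x].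
Proof.
move=> /forallP /(_ x); case: (x.1 \in Mset Z) => // /and4P [H1 /eqP H2 /eqP H3 H4] _.
by split => //; move: H4; case: (lvl sg Z (rho x)); case: (lvl sg Z x).
Qed.

Lemma compatN sg (Z : {set E}) rho x : compat sg Z rho -> x.1 \notin Mset Z -> rho x = x.
Proof.
by move=> /forallP /(_ x); case: (x.1 \in Mset Z) => // /eqP.
Qed.

Lemma CsetE sg (Z : {set E}) w b x :
  (x \in Cset sg Z w b) = [&& x.1 \in Mset Z, vx x == w & lvl sg Z x == b].
Proof. exact: in_set. Qed.

Lemma compat_le sg (Z : {set E}) rho w b : compat sg Z rho ->
  #|Cset sg Z w b| <= #|Cset sg Z w (~~ b)|.
Proof.
move=> Hc.
have inj : {in Cset sg Z w b &, injective rho}.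
  move=> x y; rewrite !CsetE => /and3P [xM _ _] /and3P [yM _ _] Exy.
  have [_ _ Hx _] := compatE Hc xM.
  have [_ _ Hy _] := compatE Hc yM.
  by rewrite -Hx Exy Hy.
rewrite -(card_in_imset inj); apply: subset_leq_card.
apply/subsetP => y /imsetP [x]; rewrite CsetE => /and3P [xM /eqP xw /eqP xb] ->.
have [H1 H2 _ H4] := compatE Hc xM.
by rewrite CsetE H1 H2 xw H4 xb !eqxx.
Qed.

Lemma compat_bal sg (Z : {set E}) rho w b : compat sg Z rho ->
  #|Cset sg Z w b| = #|Cset sg Z w (~~ b)|.
Proof.
move=> Hc; apply/eqP; rewrite eqn_leq (compat_le w b Hc) /=.
by have := compat_le w (~~ b) Hc; rewrite negbK.
Qed.

Lemma Cset_sum sg (Z : {set E}) w :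
  #|Cset sg Z w true| + #|Cset sg Z w false| =
  #|[set x : E | (x.1 \in Mset Z) && (vx x == w)]|.
Proof.
rewrite -[RHS](cardsID [set x : E | lvl sg Z x]); congr (_ + _);
  apply: eq_card => x; rewrite CsetE [in RHS]inE [in RHS]inE [in RHS]inE;
  by case: (lvl sg Z x); rewrite ?andbT ?andbF.
Qed.

Lemma half_eq (a b c d s : nat) : a + b = s -> c + d = s -> a = b -> c = d -> a = c /\ b = d.
Proof. lia. Qed.

Lemma Cset_eq sg1 sg2 (Z1 Z2 : {set E}) w b : Mset Z1 = Mset Z2 ->
  (forall c, #|Cset sg1 Z1 w c| = #|Cset sg1 Z1 w (~~ c)|) ->
  (forall c, #|Cset sg2 Z2 w c| = #|Cset sg2 Z2 w (~~ c)|) ->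
  #|Cset sg1 Z1 w b| = #|Cset sg2 Z2 w b|.
Proof.
move=> HM H1 H2.
have e1 := Cset_sum sg1 Z1 w; have e2 := Cset_sum sg2 Z2 w.
rewrite HM in e1; have h1 := H1 true; have h2 := H2 true; simpl in h1, h2.
by have [] := half_eq e1 e2 h1 h2; case: b.
Qed.


Lemma exists_compat sg (Z : {set E}) : valid sg Z -> exists rho, compat sg Z rho.
Proof.
move=> HV.
exists [ffun x => if x.1 \in Mset Z then
   nth x (enum (Cset sg Z (vx x) (~~ lvl sg Z x)))
         (index x (enum (Cset sg Z (vx x) (lvl sg Z x)))) else x].
apply/forallP => x; rewrite ffunE.
case xM: (x.1 \in Mset Z) => //.
have xin : x \in enum (Cset sg Z (vx x) (lvl sg Z x)) by rewrite mem_enum CsetE xM !eqxx.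
have Hi : index x (enum (Cset sg Z (vx x) (lvl sg Z x))) <
          size (enum (Cset sg Z (vx x) (~~ lvl sg Z x))).
  by rewrite -!cardE -(valid_bal _ _ HV) cardE index_mem.
set y := nth x _ _.
have yin : y \in enum (Cset sg Z (vx x) (~~ lvl sg Z x)) := mem_nth x Hi.
move: (yin); rewrite mem_enum CsetE => /and3P [yM /eqP yv /eqP yl].
rewrite ffunE yM yv yl negbK eqxx /=.
rewrite index_uniq ?enum_uniq //.
rewrite (set_nth_default x) ?nth_index ?eqxx //.
  by case: (lvl sg Z x).
by rewrite index_mem.
Qed.


Definition fcount sg (Z : {set E}) := #|[set rho : {ffun E -> E} | compat sg Z rho]|.

Lemma fcount_le sg1 sg2 (Z1 Z2 : {set E}) : Mset Z1 = Mset Z2 ->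
  (forall w b, #|Cset sg1 Z1 w b| = #|Cset sg2 Z2 w b|) ->
  fcount sg2 Z2 <= fcount sg1 Z1.
Proof.
move=> HM HC.
pose k1 (x : E) := if x.1 \in Mset Z1 then Some (vx x, lvl sg1 Z1 x) else None.
pose k2 (x : E) := if x.1 \in Mset Z1 then Some (vx x, lvl sg2 Z2 x) else None.
have Hk : forall i, #|[pred x | k1 x == i]| = #|[pred x | k2 x == i]|.
  case => [[w b]|].
  - transitivity #|Cset sg1 Z1 w b|.
      apply: eq_card => x; rewrite CsetE inE /k1.
      by case: (x.1 \in Mset Z1).
    rewrite HC; apply: eq_card => x; rewrite CsetE [in RHS]inE /k2 HM.
    by case: (x.1 \in Mset Z2).
  - by apply: eq_card => x; rewrite !inE /k1 /k2; case: (x.1 \in Mset Z1).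
have [phi phi_inj Hphi] := fiber_bij Hk.
pose psi := invF phi_inj.
pose F (rho : {ffun E -> E}) := [ffun y => phi (rho (psi y))].
have F_inj : injective F.
  move=> rho1 rho2 EF; apply/ffunP => x.
  have := congr1 (fun f : {ffun E -> E} => f (phi x)) EF.
  by rewrite /= !ffunE /psi invF_f => /phi_inj.
rewrite /fcount -(card_imset _ F_inj); apply: subset_leq_card.
apply/subsetP => g /imsetP [rho]; rewrite inE => Hc ->.
rewrite inE; apply/forallP => y; rewrite !ffunE.
have Ey : phi (psi y) = y by rewrite /psi f_invF.
set x := psi y in Ey *.
have Hkx := Hphi x; rewrite Ey /k1 /k2 in Hkx.
case yM : (y.1 \in Mset Z1); rewrite yM in Hkx.
- case xM : (x.1 \in Mset Z1); rewrite xM in Hkx => //.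
  case: Hkx => Hv Hl.
  have xM2 : x.1 \in Mset Z2 by rewrite -HM.
  have [x'M Hv' Hrr Hl'] := compatE Hc xM2.
  set x' := rho x in x'M Hv' Hrr Hl' *.
  have Hkx' := Hphi x'; rewrite /k1 /k2 HM x'M in Hkx'.
  move: Hkx'; case pM : ((phi x').1 \in Mset Z2) => //; case => Hv2 Hl2.
  rewrite /psi invF_f -/x' Hrr Ey eqxx HM pM Hv2 Hv' Hv eqxx Hl2 Hl' Hl /=.
  by case: (lvl sg2 Z2 x).
- case xM : (x.1 \in Mset Z1); rewrite xM in Hkx => //.
  by rewrite (compatN Hc (_ : x.1 \notin Mset Z2)) ?Ey // -HM xM.
Qed.


Definition sgc : T * T -> bool := fun _ => true.

Definition solk sg (M : {set T * T}) (rho : {ffun E -> E}) (k : {ffun T * T -> bool}) :=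
  [forall x : E, (x.1 \in M) ==>
     ((k x.1 (+) (x.2 && sg x.1)) != (k (rho x).1 (+) ((rho x).2 && sg (rho x).1)))].

Definition k0 sg M rho := odflt [ffun _ => false] [pick k | solk sg M rho k].

Definition Kf sg (Z : {set E}) rho g :=
  kZ Z g (+) k0 sg (Mset Z) rho g (+) k0 sgc (Mset Z) rho g.

Definition shiftZ sg (Z : {set E}) rho :=
  [set z : E | if z.1 \in Mset Z then z.2 == Kf sg Z rho z.1 else z \in Z].

Lemma shiftE sg (Z : {set E}) rho z :
  (z \in shiftZ sg Z rho) = if z.1 \in Mset Z then z.2 == Kf sg Z rho z.1 else z \in Z.
Proof. exact: in_set. Qed.

Lemma MsetE (Z : {set E}) g : (g \in Mset Z) = (((g, false) \in Z) != ((g, true) \in Z)).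
Proof. exact: in_set. Qed.

Lemma Mset_shift sg (Z : {set E}) rho : Mset (shiftZ sg Z rho) = Mset Z.
Proof.
apply/setP => g; rewrite [LHS]MsetE !shiftE /=.
case gM: (g \in Mset Z); first by case: (Kf sg Z rho g).
by rewrite MsetE in gM; apply/negbTE; rewrite gM.
Qed.

Lemma kZ_shift sg (Z : {set E}) rho g : g \in Mset Z -> kZ (shiftZ sg Z rho) g = Kf sg Z rho g.
Proof. by move=> gM; rewrite /kZ shiftE /= gM. Qed.

Lemma memM (Z : {set E}) z : z.1 \in Mset Z -> (z \in Z) = (z.2 == kZ Z z.1).
Proof.
case: z => g t /=; rewrite MsetE /kZ.
by case: t; case: ((g, true) \in Z); case: ((g, false) \in Z).
Qed.

Lemma solk_k0 sg M rho : (exists k, solk sg M rho k) -> solk sg M rho (k0 sg M rho).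
Proof.
move=> [k Hk]; rewrite /k0; case: pickP => [k' //|].
by move/(_ k); rewrite Hk.
Qed.

Lemma solk_kZ sg (Z : {set E}) rho : compat sg Z rho ->
  solk sg (Mset Z) rho [ffun g => kZ Z g].
Proof.
move=> Hc; apply/forallP => x; apply/implyP => xM.
have [_ _ _ Hl] := compatE Hc xM.
rewrite !ffunE; move: Hl; rewrite /lvl => ->.
by case: (kZ Z x.1 (+) (x.2 && sg x.1)).
Qed.

Lemma solk_cross sg (Z : {set E}) rho : compat sg Z rho ->
  exists k, solk sgc (Mset Z) rho k.
Proof.
move=> Hc.
pose X := [set x : E | x.1 \in Mset Z].
pose R (x : E) := (x.1, ~~ x.2).
have XE y : (y \in X) = (y.1 \in Mset Z) by exact: in_set.
have HR : invol_on X R.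
  move=> x; rewrite !XE /R /= => ->; case: x => g t /=.
  by rewrite negbK eqxx xpair_eqE eqxx /=; case: t.
have Hr : invol_on X rho.
  move=> x; rewrite !XE => xM.
  have [H1 _ H3 H4] := compatE Hc xM.
  rewrite H1 H3 eqxx andbT /=.
  by apply/eqP => E1; move: H4; rewrite E1; case: (lvl sg Z x).
have [c Hcol] := bip_col (n := #|X|) erefl HR Hr.
exists [ffun g => c (g, false)].
have cE x : x \in X -> [ffun g => c (g, false)] x.1 (+) (x.2 && sgc x.1) = c x.
  move=> xX; rewrite ffunE /sgc andbT.
  case: x xX => g [] //= xX; last by rewrite addbF.
  have /andP [H _] := Hcol _ xX; move: H; rewrite /R /=.
  by case: (c (g, false)); case: (c (g, true)).
apply/forallP => x; apply/implyP => xM.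
have xX : x \in X by rewrite XE.
have [rX _ _] := and3P (Hr x xX).
rewrite (cE x xX) (cE _ rX).
by have /andP [_ H] := Hcol _ xX; rewrite eq_sym.
Qed.


Lemma compat_shift sg (Z : {set E}) rho : compat sg Z rho ->
  compat sgc (shiftZ sg Z rho) rho.
Proof.
move=> Hc.
have Hs := solk_k0 (ex_intro (fun k => solk sg (Mset Z) rho k) _ (solk_kZ Hc)).
have Hx := solk_k0 (solk_cross Hc).
apply/forallP => x; rewrite Mset_shift.
case xM: (x.1 \in Mset Z); last by rewrite (compatN Hc) ?xM.
have [H1 /eqP H2 /eqP H3 H4] := compatE Hc xM.
rewrite H1 H2 H3 /=.
have := implyP (forallP Hs x) xM; have := implyP (forallP Hx x) xM.
rewrite /lvl !kZ_shift // /Kf /sgc.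
move: H4; rewrite /lvl.
case: (kZ Z x.1); case: (kZ Z (rho x).1); case: (x.2); case: (rho x).2;
case: (sg x.1); case: (sg (rho x).1);
case: (k0 sg (Mset Z) rho x.1); case: (k0 sg (Mset Z) rho (rho x).1);
case: (k0 (fun _ => true) (Mset Z) rho x.1); by case: (k0 (fun _ => true) (Mset Z) rho (rho x).1).
Qed.

Lemma MsubO (Z : {set E}) g : (forall z, z \in Z -> z.1 \in O) -> g \in Mset Z -> g \in O.
Proof.
move=> HZ; rewrite MsetE.
case H1: ((g, false) \in Z); first by move=> _; exact: (HZ _ H1).
case H2: ((g, true) \in Z) => // _; exact: (HZ _ H2).
Qed.

Lemma valid_shift sg (Z : {set E}) rho : valid sg Z -> compat sg Z rho ->
  valid sgc (shiftZ sg Z rho).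
Proof.
move=> HV Hc.
have HZ := valid_sub HV.
have HZ' : forall z, z \in shiftZ sg Z rho -> z.1 \in O.
  move=> z; rewrite shiftE; case zM: (z.1 \in Mset Z).
    by move=> _; exact: (MsubO HZ zM).
  exact: HZ.
apply/andP; split; first by apply/forall_inP.
apply/forallP => w; apply/forallP => b; apply/eqP.
rewrite -(valid_deg w b HV) deg_split // deg_split //.
congr (Posz (_ + _)).
  rewrite /Aw Mset_shift; apply: eq_bigr => x /and3P [_ _ xM].
  by rewrite /kZ shiftE /= (negbTE xM).
have Hc' := compat_shift Hc.
apply: Cset_eq; first exact: Mset_shift.
  by move=> c; exact: compat_bal Hc'.
by move=> c; exact: valid_bal HV.
Qed.

Lemma shift_inj sg (Z1 Z2 : {set E}) rho : shiftZ sg Z1 rho = shiftZ sg Z2 rho -> Z1 = Z2.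
Proof.
move=> Es.
have EM : Mset Z1 = Mset Z2 by rewrite -(Mset_shift sg Z1 rho) Es Mset_shift.
have Ek g : g \in Mset Z1 -> kZ Z1 g = kZ Z2 g.
  move=> gM; have := kZ_shift sg rho gM; rewrite Es kZ_shift -?EM //.
  by rewrite /Kf EM => /addIb /addIb.
apply/setP => z.
case zM: (z.1 \in Mset Z1).
  by rewrite !memM -?EM // Ek.
have := congr1 (fun S : {set E} => z \in S) Es; rewrite /= !shiftE -EM zM.
by [].
Qed.

Lemma fcount_shift sg (Z : {set E}) rho : valid sg Z -> compat sg Z rho ->
  fcount sgc (shiftZ sg Z rho) <= fcount sg Z.
Proof.
move=> HV Hc; apply: fcount_le; first by rewrite Mset_shift.
move=> w b; apply: Cset_eq; first by rewrite Mset_shift.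
  by move=> c; exact: valid_bal HV.
by move=> c; exact: compat_bal (compat_shift Hc).
Qed.

Lemma fcount_gt0 sg (Z : {set E}) rho : compat sg Z rho -> 0 < fcount sg Z.
Proof. by move=> Hc; apply/card_gt0P; exists rho; rewrite inE. Qed.

End Core.

Section Trans.
Variables (T : finType) (e : rel T) (e_sym : symmetric e) (e_irr : irreflexive e)
  (s : {set T} -> bool) (r : T -> int).
Local Notation E := ((T * T) * bool)%type.

Definition Ob : {set T * T} := [set g : T * T | e g.1 g.2 && (enum_rank g.1 < enum_rank g.2)].
Definition sgs (g : T * T) := s [set g.1; g.2].
Definition fz (z : E) : {set T * bool} := [set (z.1.1, z.2); (z.1.2, z.2 (+) sgs z.1)].

Lemma Ob_neq g : g \in Ob -> g.1 != g.2.
Proof.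
rewrite inE => /andP [_ H]; apply/eqP => E1; move: H; rewrite E1 ltnn //.
Qed.

Lemma sum_E (F : E -> nat) : \sum_(x : E) F x = \sum_(g : T * T) \sum_(t : bool) F (g, t).
Proof. by rewrite pair_bigA; apply: eq_bigr => [[g t]]. Qed.

Lemma deg_fz (Z : {set E}) w b : (forall z, z \in Z -> z.1 \in Ob) ->
  #|[set z in Z | (w, b) \in fz z]| = deg Ob sgs Z w b.
Proof.
move=> HZ.
have H1 : #|[set z in Z | (w, b) \in fz z]| =
   \sum_(g : T * T) \sum_(a : bool) \sum_(t : bool)
      ((((g, a) \in Z) && (vx (g, t) == w)) && ((a (+) (t && sgs g)) == b)).
  rewrite -sum1_card big_mkcond /= sum_E; apply: eq_bigr => g _.
  apply: eq_bigr => a _; rewrite inE.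
  case gZ: ((g, a) \in Z) => /=; last by rewrite big1.
  rewrite /fz in_set2 big_bool /vx /= !xpair_eqE addbF.
  have := Ob_neq (HZ _ gZ).
  rewrite (eq_sym g.2) (eq_sym g.1) (eq_sym (a (+) sgs g)) (eq_sym a).
  move=> Hne.
  have nAB : ((w == g.1) && (w == g.2)) = false.
    by apply/negbTE; apply: contra Hne => /andP [/eqP <- /eqP <-].
  move: nAB; case: (w == g.1); case: (w == g.2); case: (b == a);
    by case: (b == a (+) sgs g).
rewrite H1 /deg [RHS]big_mkcond /= [RHS]sum_E; apply: eq_bigr => g _.
rewrite exchange_big /=; apply: eq_bigr => t _ /=.
case gO: (g \in Ob) => /=.
  case: (vx (g, t) == w) => /=; first by apply: eq_bigr => a _; rewrite andbT.
  by rewrite big1 // => a _; rewrite andbF.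
by rewrite big1 // => a _; case gZ: ((g, a) \in Z) => //; move: (HZ _ gZ); rewrite gO.
Qed.


Lemma fz_inj : {in [pred z : E | z.1 \in Ob] &, injective fz}.
Proof.
move=> [[u1 v1] a1] [[u2 v2] a2]; rewrite !inE /= => /andP [_ l1] /andP [_ l2] Ef.
have p1 : (u1, a1) \in fz ((u2, v2), a2) by rewrite -Ef /fz in_set2 eqxx.
have q1 : (v1, a1 (+) sgs (u1, v1)) \in fz ((u2, v2), a2) by rewrite -Ef /fz in_set2 eqxx orbT.
have p2 : (u2, a2) \in fz ((u1, v1), a1) by rewrite Ef /fz in_set2 eqxx.
move: p1 q1 p2; rewrite /fz !in_set2 /= !xpair_eqE.
case/orP => /andP [/eqP Eu /eqP Ea].
  subst u2 a2 => /orP [/andP [/eqP Ev _]|/andP [/eqP -> _]] //.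
  by move: l1; rewrite Ev ltnn.
subst u1 => _ /orP [/andP [/eqP Eu _]|/andP [/eqP Ev _]].
  by move: l2; rewrite Eu ltnn.
by move: l1 l2; rewrite Ev => /ltn_trans H /H; rewrite ltnn.
Qed.

Lemma fz_edge z : z.1 \in Ob -> fz z \in edges (two_cover e s).
Proof.
move=> zO; apply/imsetP; exists ((z.1.1, z.2), (z.1.2, z.2 (+) sgs z.1)) => //.
rewrite inE /two_cover /=; move: zO; rewrite inE => /andP [-> _] /=.
by rewrite addKb.
Qed.

Lemma edge_fz gh : gh \in edges (two_cover e s) -> exists2 z, z.1 \in Ob & gh = fz z.
Proof.
case/imsetP => [[x y]]; rewrite inE /two_cover /= => /andP [exy /eqP Hs] ->.
have nxy : x.1 != y.1 by apply: contraTneq exy => ->; rewrite e_irr.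
have nr : (enum_rank x.1 : nat) != enum_rank y.1.
  by apply: contra nxy => /eqP /val_inj /enum_rank_inj ->.
case: (ltngtP (enum_rank x.1) (enum_rank y.1)) => [lt|gt|eqr]; last by rewrite eqr eqxx in nr.
- exists ((x.1, y.1), x.2); first by rewrite inE /= exy lt.
  rewrite /fz /sgs /= -Hs addKb.
  by case: x {exy nxy nr lt Hs} => ??; case: y => ??.
- exists ((y.1, x.1), y.2); first by rewrite inE /= e_sym exy gt.
  rewrite /fz /sgs /= [[set y.1; x.1]]setUC -Hs addbC addbK setUC.
  by case: x {exy nxy nr gt Hs} => ??; case: y => ??.
Qed.


Lemma h_r_eq : h_r (two_cover e s) (lift_r r) = #|[set Z : {set E} | valid Ob r sgs Z]|.
Proof.
have memf (Z : {set E}) z : (forall z, z \in Z -> z.1 \in Ob) -> z.1 \in Ob ->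
    (fz z \in fz @: Z) = (z \in Z).
  move=> HZ zO; apply/imsetP/idP => [[z' z'Z Ef]|]; last by exists z.
  by rewrite (fz_inj (_ : z \in [pred z : E | z.1 \in Ob]) (_ : z' \in [pred z : E | z.1 \in Ob]) Ef) // inE; apply: HZ.
have degS (Z : {set E}) w b : (forall z, z \in Z -> z.1 \in Ob) ->
    #|[set g in fz @: Z | (w, b) \in g]| = deg Ob sgs Z w b.
  move=> HZ; rewrite -deg_fz //.
  have -> : [set g in fz @: Z | (w, b) \in g] = fz @: [set z in Z | (w, b) \in fz z].
    apply/setP => g; rewrite inE; apply/andP/imsetP.
      by case=> /imsetP [z zZ ->] H; exists z; rewrite // inE zZ H.
    by case=> z; rewrite inE => /andP [zZ H] ->; split => //; apply: imset_f.
  rewrite card_in_imset // => z1 z2; rewrite !inE => /andP [z1Z _] /andP [z2Z _].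
  by apply: fz_inj; rewrite inE; apply: HZ.
rewrite /h_r.
suff -> : [set S : {set {set T * bool}} | (S \subset edges (two_cover e s)) &&
    [forall v, (#|[set g in S | v \in g]| : int) == lift_r r v]] =
    (fun Z : {set E} => fz @: Z) @: [set Z : {set E} | valid Ob r sgs Z].
  rewrite card_in_imset // => Z1 Z2; rewrite !inE => V1 V2 EZ.
  apply/setP => z.
  case zO: (z.1 \in Ob).
    have H1 := valid_sub V1; have H2 := valid_sub V2.
    by rewrite -(memf Z1) // EZ memf.
  apply/idP/idP => zZ.
    by move: (valid_sub V1 zZ); rewrite zO.
  by move: (valid_sub V2 zZ); rewrite zO.
apply/setP => S; rewrite inE; apply/andP/imsetP.
  case=> Ssub /forallP Hdeg.
  pose Z := [set z : E | (z.1 \in Ob) && (fz z \in S)].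
  have HZ : forall z, z \in Z -> z.1 \in Ob by move=> z; rewrite inE => /andP [].
  have SZ : S = fz @: Z.
    apply/setP => g; apply/idP/imsetP.
      move=> gS; have [z zO gz] := edge_fz (subsetP Ssub _ gS).
      by exists z; rewrite // inE zO -gz gS.
    by case=> z; rewrite inE => /andP [_ H] ->.
  exists Z => //; rewrite inE; apply/andP; split; first by apply/forall_inP.
  apply/forallP => w; apply/forallP => b.
  by rewrite -degS // -SZ; exact: (Hdeg (w, b)).
case=> Z; rewrite inE => HV ->; split.
  by apply/subsetP => g /imsetP [z zZ ->]; apply: fz_edge; exact: (valid_sub HV zZ).
apply/forallP => [[w b]]; rewrite degS; last exact: valid_sub HV.
by rewrite /lift_r /= (valid_deg w b HV).
Qed.

End Trans.
Section CoreLe.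
Import Order.TTheory GRing.Theory Num.Theory.
Local Open Scope ring_scope.

Lemma core_le (T : finType) (O : {set T * T}) (r : T -> int) (sg : T * T -> bool) :
  (#|[set Z : {set (T * T) * bool} | valid O r sg Z]| <=
   #|[set Z : {set (T * T) * bool} | valid O r (@sgc T) Z]|)%N.
Proof.
pose Om (s : T * T -> bool) :=
  [set p : {set (T * T) * bool} * {ffun (T * T) * bool -> (T * T) * bool} |
     valid O r s p.1 && compat s p.1 p.2].
pose W s (Z : {set (T * T) * bool}) : rat := ((fcount s Z)%:R)^-1.
have cnt s : (#|[set Z : {set (T * T) * bool} | valid O r s Z]|%:R : rat) =
             \sum_(p in Om s) W s p.1.
  rewrite (eq_bigl (fun p => valid O r s p.1 && compat s p.1 p.2)); last first.
    by move=> p; rewrite inE.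
  rewrite -(pair_big_dep (fun Z => valid O r s Z) (fun Z rho => compat s Z rho)
                         (fun Z _ => W s Z)) /=.
  rewrite -sum1_card natr_sum.
  rewrite [LHS](eq_bigl (fun Z => valid O r s Z)); last by move=> Z; rewrite inE.
  apply: eq_bigr => Z HV.
  rewrite (eq_bigl (fun rho => rho \in [set rho | compat s Z rho])); last first.
    by move=> rho; rewrite inE.
  rewrite sumr_const /W -[RHS]mulr_natr /fcount mulVf //.
  have [rho Hc] := exists_compat HV.
  by rewrite pnatr_eq0 -lt0n (fcount_gt0 Hc).
rewrite -(ler_nat rat) cnt cnt.
apply: (@le_trans _ _ (\sum_(p in Om sg) W (@sgc T) (shiftZ sg p.1 p.2))).
  apply: ler_sum => p; rewrite inE => /andP [HV Hc].
  have Hc' := compat_shift Hc.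
  rewrite /W lef_pV2 ?ler_nat ?(fcount_shift HV Hc) // posrE ltr0n.
    exact: fcount_gt0 Hc.
  exact: fcount_gt0 Hc'.
pose Phi (p : {set (T * T) * bool} * {ffun (T * T) * bool -> (T * T) * bool}) :=
  (shiftZ sg p.1 p.2, p.2).
have inj : {in Om sg &, injective Phi}.
  move=> [Z1 rho1] [Z2 rho2] _ _ [] /= E1 E2.
  by rewrite E2 in E1; rewrite (shift_inj E1) E2.
have -> : \sum_(p in Om sg) W (@sgc T) (shiftZ sg p.1 p.2) = \sum_(q in Phi @: Om sg) W (@sgc T) q.1 by rewrite big_imset.
have sub : Phi @: Om sg \subset Om (@sgc T).
  apply/subsetP => q /imsetP [p]; rewrite inE => /andP [HV Hc] ->.
  by rewrite inE /= (valid_shift HV Hc) (compat_shift Hc).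
rewrite [X in _ <= X](big_setID (Phi @: Om sg)) /= (setIidPr sub) lerDl.
by apply: sumr_ge0 => i _; rewrite invr_ge0 ler0n.
Qed.

End CoreLe.

Theorem theorem1p8 (T : finType) (e : rel T) (e_sym : symmetric e)
  (e_irr : irreflexive e) (r : T -> int) (s : {set T} -> bool) :
  (h_r (two_cover e s) (lift_r r) <= h_r (bip_double_cover e) (lift_r r))%N.
Proof.
rewrite /bip_double_cover (h_r_eq e_sym e_irr s r) (h_r_eq e_sym e_irr (fun _ => true) r).
exact: core_le.
Qed.
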